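(* Let $q=4f+1$ be a prime, $\alpha$ a generator of $\mathbb Z_q^*$, and $D_k=\{\alpha^{4i+k}:i=0,1,\dots,f-1\}$ for $k=0,1,2,3$. Put $\mathfrak D_0=D_0\cup D_2$ and $\mathfrak D_1=D_1\cup D_3$, and let $\zeta_4\in\mathbb C$ be a primitive $4$th root of unity. Define the sequence $\underline a=(a_0,a_1,\dots,a_{q-1},\dots)$ of period $q$ by $a_i=\zeta_4^k$ if $i\in\mathfrak D_k$ ($k=0,1$) and $a_0=0$. Then $\underline a$ is an almost quaternary nearly perfect sequence of type $\frac{q-3}{2}$ with one zero-symbol, i.e. $C_{\underline a}(t)=\frac{q-3}{2}$ for all $1\le t\le q-1$.
   Context: $C_{\underline a}(t)=\sum_{i=0}^{q-1}a_i\overline{a_{i+t}}$, indices modulo $q$, bar denoting complex conjugation. *)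

(* Defs.v *)
From HB Require Import structures.
From mathcomp Require Import all_boot all_order all_algebra all_field.
Set Implicit Arguments. Unset Strict Implicit. Unset Printing Implicit Defensive.
Import Order.TTheory GRing.Theory Num.Theory.
Local Open Scope ring_scope.

Definition cyc_class (q f : nat) (alpha : 'F_q) (k : nat) : {set 'F_q} :=
  [set alpha ^+ (4 * i + k)%N | i : 'I_f].

Definition seq_a (q f : nat) (alpha : 'F_q) (zeta : algC) (i : nat) : algC :=
  let x : 'F_q := i%:R in
  if x \in cyc_class f alpha 0 :|: cyc_class f alpha 2 then 1
  else if x \in cyc_class f alpha 1 :|: cyc_class f alpha 3 then zeta
  else 0.

Definition autocorr (q : nat) (a : nat -> algC) (t : nat) : algC :=
  \sum_(i < q) a i * (a ((i + t) %% q)%N)^*.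

(* Main.v *)
Require Import Defs.
From HB Require Import structures.
From mathcomp Require Import all_boot all_order all_algebra all_field.
From mathcomp Require Import ring.
Set Implicit Arguments. Unset Strict Implicit. Unset Printing Implicit Defensive.
Import Order.TTheory GRing.Theory Num.Theory.
Local Open Scope ring_scope.

Definition chi (F : finFieldType) (f : nat) (x : F) : algC :=
  if x == 0 then 0 else if x ^+ (2 * f) == 1 then 1 else -1.

Lemma fermat (F : finFieldType) (f : nat) (x : F) :
  #|F| = (4 * f).+1 -> x != 0 -> x ^+ (4 * f) = 1.
Proof.
move=> cF nz; apply: (mulIf nz); rewrite mul1r -exprSr -cF; exact: expf_card.
Qed.

Lemma e_m1 (F : finFieldType) (f : nat) (x : F) :
  #|F| = (4 * f).+1 -> x != 0 -> x ^+ (2 * f) != 1 -> x ^+ (2 * f) = -1.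
Proof.
move=> cF nz ne.
have : (x ^+ (2 * f)) ^+ 2 == 1.
  by rewrite -exprM mulnC mulnA fermat.
by rewrite sqrf_eq1 (negbTE ne) => /eqP.
Qed.

Lemma chiM (F : finFieldType) (f : nat) (x y : F) :
  #|F| = (4 * f).+1 -> chi f (x * y) = chi f x * chi f y.
Proof.
move=> cF; rewrite /chi mulf_eq0.
have [x0|nx] := eqVneq x 0; first by rewrite x0 /= mul0r.
have [y0|ny] := eqVneq y 0; first by rewrite y0 orbT /= mulr0.
rewrite /=.
rewrite exprMn.
have [ex|ex] := eqVneq (x ^+ (2 * f)) 1; have [ey|ey] := eqVneq (y ^+ (2 * f)) 1.
- by rewrite ex ey mulr1 eqxx mulr1.
- by rewrite ex mul1r (negbTE ey) mul1r.
- by rewrite ey mulr1 (negbTE ex) mulr1.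
- by rewrite (e_m1 cF nx ex) (e_m1 cF ny ey) mulrNN mulr1 eqxx mulrNN mulr1.
Qed.

Lemma chi0 (F : finFieldType) (f : nat) : chi f (0 : F) = 0.
Proof. by rewrite /chi eqxx. Qed.

Lemma chi1 (F : finFieldType) (f : nat) : chi f (1 : F) = 1.
Proof. by rewrite /chi oner_eq0 expr1n eqxx. Qed.

Lemma chiN1 (F : finFieldType) (f : nat) : chi f (-1 : F) = 1.
Proof. by rewrite /chi oppr_eq0 oner_eq0 exprM sqrrN expr1n expr1n eqxx. Qed.

Lemma chi_sq (F : finFieldType) (f : nat) (x : F) :
  #|F| = (4 * f).+1 -> x != 0 -> chi f x * chi f x = 1.
Proof.
move=> cF nz; rewrite -chiM // /chi mulf_eq0 (negbTE nz) /=.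
by rewrite exprMn -expr2 -exprM (_ : (2 * f * 2 = 4 * f)%N) ?fermat ?eqxx // mulnC mulnA.
Qed.

Lemma chi_alpha (F : finFieldType) (f : nat) (alpha : F) :
  (0 < f)%N -> (4 * f).-primitive_root alpha -> chi f alpha = -1.
Proof.
move=> fp pr; rewrite /chi.
have anz : alpha != 0.
  apply/negP=> /eqP a0; move: (prim_expr_order pr); rewrite a0 expr0n.
  by rewrite muln_eq0 /= eqn0Ngt fp /= => /eqP; rewrite eq_sym oner_eq0.
rewrite (negbTE anz) -(prim_order_dvd pr) gtnNdvd //; first by rewrite muln_gt0.
by rewrite ltn_pmul2r.
Qed.

Lemma sum_chi (F : finFieldType) (f : nat) (alpha : F) :
  #|F| = (4 * f).+1 -> (0 < f)%N -> (4 * f).-primitive_root alpha ->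
  \sum_(x : F) chi f x = 0.
Proof.
move=> cF fp pr.
have anz : alpha != 0.
  by apply/negP=> /eqP a0; move: (chi_alpha fp pr); rewrite a0 chi0 => /eqP; rewrite eq_sym oppr_eq0 oner_eq0.
set S := \sum_x _.
have : S = - S.
  rewrite {1}/S (reindex_inj (mulfI anz)) /=.
  under eq_bigr do rewrite chiM // chi_alpha //.
  by rewrite -mulr_sumr mulN1r.
move/eqP; rewrite -subr_eq0 opprK -mulr2n mulrn_eq0 /= => /eqP //.
Qed.

Lemma sum_delta (F : finFieldType) (s : F) (G : F -> algC) :
  \sum_(x : F) (x + s == 0)%:R * G x = G (- s).
Proof.
rewrite (bigD1 (- s)) //= addNr eqxx mul1r big1 ?addr0 // => x nx.
by rewrite addr_eq0 (negbTE nx) mul0r.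
Qed.

Lemma sum_corr (F : finFieldType) (f : nat) (alpha : F) (t : F) :
  #|F| = (4 * f).+1 -> (0 < f)%N -> (4 * f).-primitive_root alpha -> t != 0 ->
  \sum_(x : F) chi f x * chi f (x + t) = -1.
Proof.
move=> cF fp pr tnz.
have pt : forall x : F, chi f x * chi f (x + t) = chi f (1 + t * x^-1) - (x + 0 == 0)%:R * 1.
  move=> x; rewrite addr0 mulr1; have [->|nx] := eqVneq x 0.
    by rewrite chi0 mul0r invr0 mulr0 addr0 chi1 subrr.
  rewrite subr0.
  have -> : x + t = x * (1 + t * x^-1) by rewrite mulrDr mulr1 mulrCA mulfV // mulr1.
  by rewrite chiM // mulrA chi_sq // mul1r.
under eq_bigr do rewrite pt.
rewrite sumrB sum_delta ?oppr0 ?mulr1.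
rewrite (reindex_inj invr_inj) /=.
under eq_bigr do rewrite invrK.
have hinj : injective (fun x : F => 1 + t * x).
  by move=> a b /addrI /(mulfI tnz).
rewrite -(@reindex_inj _ _ _ _ _ xpredT (fun x => chi f x) hinj) /= (sum_chi cF fp pr) sub0r //.
Qed.

Lemma zeta_facts (zeta : algC) : 4.-primitive_root zeta ->
  zeta ^+ 2 = -1 /\ zeta * zeta^* = 1 /\ zeta^* = - zeta.
Proof.
move=> pr.
have z2 : zeta ^+ 2 = -1.
  have : (zeta ^+ 2) ^+ 2 == 1 by rewrite -exprM (prim_expr_order pr).
  by rewrite sqrf_eq1 -(prim_order_dvd pr) /= => /eqP.
have zz : zeta * zeta^* = 1.
  by rewrite -normCK -normrX z2 normrN1.
split=> //; split=> //.
by rewrite -[zeta^*]mul1r -[1](opprK) -z2 expr2 mulNr -mulrA zz mulr1.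
Qed.

Lemma Fq_sum (q : nat) (G : 'F_q -> algC) : prime q ->
  \sum_(i < q) G ((i : nat)%:R) = \sum_(x : 'F_q) G x.
Proof.
move=> pq.
have hinj : injective (fun i : 'I_q => ((i : nat)%:R : 'F_q)).
  move=> i j /(congr1 val); rewrite /= !val_Fp_nat // !modn_small //.
  by move=> h; apply: val_inj.
have hb := inj_card_bij hinj (eq_leq (etrans (card_Fp pq) (esym (card_ord q)))).
by rewrite (reindex _ (onW_bij _ hb)).
Qed.

Lemma alpha_nz (F : fieldType) (f : nat) (alpha : F) :
  (0 < f)%N -> (4 * f).-primitive_root alpha -> alpha != 0.
Proof.
move=> fp pr; apply/negP=> /eqP a0; move: (prim_expr_order pr); rewrite a0 expr0n.
by rewrite muln_eq0 /= eqn0Ngt fp /= => /eqP; rewrite eq_sym oner_eq0.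
Qed.

Lemma cyc_mem (q f : nat) (alpha : 'F_q) (c : nat) (x : 'F_q) :
  (0 < f)%N -> (4 * f).-primitive_root alpha ->
  x \in cyc_class f alpha c -> x != 0 /\ (x ^+ (2 * f) == 1) = ~~ odd c.
Proof.
move=> fp pr /imsetP [i _ ->]; split.
  by rewrite expf_eq0 (negbTE (alpha_nz fp pr)) andbF.
rewrite -exprM -(prim_order_dvd pr) (_ : (4 * f = 2 * (2 * f))%N); last first.
  by rewrite mulnA.
by rewrite dvdn_pmul2r ?muln_gt0 // dvdn2 oddD oddM /=.
Qed.

Lemma cyc_ex (q f : nat) (alpha : 'F_q) (x : 'F_q) :
  prime q -> q = (4 * f + 1)%N -> (0 < f)%N -> (4 * f).-primitive_root alpha ->
  x != 0 -> exists2 c, (c < 4)%N & x \in cyc_class f alpha c.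
Proof.
move=> pq qE fp pr nz.
have cF : #|'F_q| = (4 * f).+1 by rewrite card_Fp // qE addn1.
have [k0 ->] := prim_rootP pr (fermat cF nz).
move: (ltn_ord k0); move: (nat_of_ord k0) => k ltk4.
exists (k %% 4)%N; first by rewrite ltn_mod.
apply/imsetP.
have ltk : (k %/ 4 < f)%N by rewrite ltn_divLR // mulnC.
exists (Ordinal ltk) => //=.
by rewrite {1}(divn_eq k 4) mulnC.
Qed.

Definition aF (q f : nat) (zeta : algC) (x : 'F_q) : algC :=
  if x == 0 then 0 else if x ^+ (2 * f) == 1 then 1 else zeta.

Lemma seqE (q f : nat) (alpha : 'F_q) (zeta : algC) (n : nat) :
  prime q -> q = (4 * f + 1)%N -> (0 < f)%N -> (4 * f).-primitive_root alpha ->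
  seq_a f alpha zeta n = aF f zeta (n%:R : 'F_q).
Proof.
move=> pq qE fp pr; rewrite /seq_a /aF; set x := (n%:R : 'F_q).
have [x0|nz] := eqVneq x 0.
  have nin c : x \in cyc_class f alpha c = false.
    by apply/negP => /(cyc_mem fp pr) []; rewrite x0 eqxx.
  by rewrite !in_setU !nin.
have [c c4 xc] := cyc_ex pq qE fp pr nz.
have [_ ec] := cyc_mem fp pr xc.
have nin c' : odd c' != odd c -> x \in cyc_class f alpha c' = false.
  move=> h; apply/negP => /(cyc_mem fp pr) [_ e'].
  by rewrite e' in ec; move: h; rewrite -(negbK (odd c')) ec negbK eqxx.
rewrite ec !in_setU; move: c4 xc ec nin; case: c => [|[|[|[|c]]]] //= _ xc _ nin.
- by rewrite xc.
- by rewrite (nin 0%N) // (nin 2%N) // xc.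
- by rewrite xc orbT.
- by rewrite (nin 0%N) // (nin 2%N) // xc orbT.
Qed.

Lemma pw (q f : nat) (zeta : algC) (x T : 'F_q) :
  4.-primitive_root zeta -> T != 0 ->
  aF f zeta x * (aF f zeta (x + T))^* =
  1 / 2 * (1 - (x + 0 == 0)%:R * 1 - (x + T == 0)%:R * 1 + chi f x * chi f (x + T))
  + zeta / 2 * (chi f (x + T) - (x + 0 == 0)%:R * chi f (x + T) - chi f x
                + (x + T == 0)%:R * chi f x).
Proof.
move=> zr tnz; have [z2 [zz zc]] := zeta_facts zr.
rewrite addr0 /aF /chi.
have [->|nx] := eqVneq x 0.
  rewrite add0r (negbTE tnz) /=.
  by case: (T ^+ (2 * f) == 1) => /=; field; rewrite ?pnatr_eq0.
have [y0|ny] := eqVneq (x + T) 0.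
  rewrite /=; case: (x ^+ (2 * f) == 1) => /=; rewrite ?rmorph0; field; by rewrite ?pnatr_eq0.
rewrite /=; case: (x ^+ (2 * f) == 1); case: ((x + T) ^+ (2 * f) == 1);
  rewrite /= ?rmorph1 ?mul1r ?zz ?zc; field; by rewrite ?pnatr_eq0.
Qed.

Lemma sum_chi_shift (F : finFieldType) (f : nat) (T : F) :
  \sum_(x : F) chi f (x + T) = \sum_(x : F) chi f x.
Proof. by rewrite [RHS](reindex_inj (addIr T)). Qed.

Unset Implicit Arguments.
Theorem theorem4 (q f : nat) (alpha : 'F_q) (zeta : algC) :
  prime q -> q = (4 * f + 1)%N ->
  (q.-1).-primitive_root alpha ->
  4.-primitive_root zeta ->
  forall t : nat, (1 <= t <= q.-1)%N ->
    autocorr q (seq_a f alpha zeta) t = (q%:R - 3) / 2.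
Proof.
move=> pq qE pr zr t /andP[t1 tq].
have fp : (0 < f)%N by move: pq; rewrite qE; case: (f).
have e4 : q.-1 = (4 * f)%N by rewrite qE addn1.
have pr4 : (4 * f).-primitive_root alpha by rewrite -e4.
have cF : #|'F_q| = (4 * f).+1 by rewrite card_Fp // qE addn1.
have tnz : (t%:R : 'F_q) != 0.
  apply/eqP => /(congr1 val); rewrite /= val_Fp_nat // modn_small.
    by move=> t0; move: t1; rewrite t0.
  by rewrite (leq_ltn_trans tq) // prednK // prime_gt0.
rewrite /autocorr.
under eq_bigr do rewrite !(seqE _ _ pq qE fp pr4) Fp_nat_mod // natrD.
rewrite (Fq_sum (fun x => aF f zeta x * (aF f zeta (x + t%:R))^*)) //.
set T := (t%:R : 'F_q).
under eq_bigr => x _ do rewrite (pw f x zr tnz).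
rewrite big_split /= -!mulr_sumr.
rewrite !(big_split, sumrB) /= !sum_delta sum_chi_shift (sum_chi cF fp pr4).
rewrite (sum_corr cF fp pr4 tnz) sumr_const cF !sumrN !sum_delta (sum_chi cF fp pr4).
have cN : chi f (- (t%:R : 'F_q)) = chi f (t%:R : 'F_q) by rewrite -mulN1r chiM // chiN1 mul1r.
rewrite cN ?oppr0 ?chi0 ?mulr1 qE add0r addn1.
rewrite add0r addr0 addNr mulr0 addr0 mul1r mulrC; congr (_ / _); rewrite -!addrA; congr (_ + _).
by rewrite -!opprD; congr (- _); rewrite -[3]/(3%:R) !mulrS mulr0n addr0.
Qed.
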